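(* Let $\rho\colon\mathrm{Isom}(\mathbf H^1_{\mathbb C})_o\to\mathrm{Isom}(\mathbf H^\infty_{\mathbb C})_o$ be irreducible, with $\eta_1,\eta_2,E,\langle\cdot,\cdot\rangle$ as in the context, and let $\rho\colon P\to U(B)$ also denote a continuous homomorphic lift of $\rho|_P$ normalized so that $B(\rho(g(\lambda,b))\eta_1,\eta_2)>0$ for all $\lambda>0,b\in\mathbb R$. Then there is a continuous isomorphism $\chi\colon\mathbb R_{>0}\to\mathbb R_{>0}$ such that for all $\lambda>0$, $b\in\mathbb R$, with respect to $\mathbb C\eta_1\oplus\mathbb C\eta_2\oplus E$, $$\rho(g(\lambda,b))=\begin{pmatrix}\chi(\lambda)&-\chi(\lambda)|c(\lambda,b)|^2/2+i\Delta(\lambda,b)&-\chi(\lambda)\langle\pi(\lambda,b)(\cdot),c(\lambda,b)\rangle\\0&\chi(\lambda)^{-1}&0\\0&c(\lambda,b)&\pi(\lambda,b)\end{pmatrix},$$ where, writing $\Delta(b)=\Delta(1,b)$, $c(b)=c(1,b)$, $\pi(b)=\pi(1,b)$, for all $\lambda>0$, $b,d\in\mathbb R$: (1) $\Delta(\lambda,b)\in\mathbb R$ and $(\lambda,b)\mapsto\Delta(\lambda,b)$ is continuous; (2) $c(\lambda,b)\in E$ and $g(\lambda,b)\mapsto c(\lambda,b)$ is continuous; (3) $\pi(\lambda,b)$ is unitary on $E$ and $g(\lambda,b)\mapsto\pi(\lambda,b)$ is a strongly continuous unitary representation of $P$; (4) $c(b+d)=c(b)+\pi(b)c(d)$; (5)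 $\Delta(\lambda,0)=0$ and $c(\lambda,0)=0$; (6) $\chi(\lambda)\pi(\lambda,0)c(b)=c(\lambda^2b)$; (7) $\chi(\lambda)^2\Delta(b)=\Delta(\lambda^2b)$; (8) $\Delta(-b)=-\Delta(b)$; (9) $\mathrm{Im}\langle c(d),c(b)\rangle=\Delta(d-b)-\Delta(d)+\Delta(b)$; (10) $\mathrm{Re}\langle c(d),c(b)\rangle=-\tfrac{|c(d-b)|^2}{2}+\tfrac{|c(b)|^2}{2}+\tfrac{|c(d)|^2}{2}$.
   Context: $\mathcal H$ is a separable complex Hilbert space with a strongly non-degenerate Hermitian form $B$ (linear in the first variable) of signature $(1,\infty)$; $\mathbf H^\infty_{\mathbb C}=\{[v]:B(v,v)>0\}$, $\cosh d([v],[w])=|B(v,w)|/\sqrt{B(v,v)B(w,w)}$, boundary = isotropic lines, $\mathrm{Isom}(\mathbf H^\infty_{\mathbb C})_o=PU(B)$. $\mathbf H^1_{\mathbb C}$: $\mathbb C^2$ with $B(z,w)=z_1\bar w_1-z_2\bar w_2$, $\xi_1=(e_1+e_2)/\sqrt2$, $\xi_2=(e_1-e_2)/\sqrt2$; $g(\lambda,b)\in SU(1,1)$ has matrix $\begin{pmatrix}\lambda&ib\\0&\lambda^{-1}\end{pmatrix}$ in basis $(\xi_1,\xi_2)$, $P=\{g(\lambda,b):\lambda>0,b\in\mathbb R\}$, identified with its image in $PU(1,1)=\mathrm{Isom}(\mathbf H^1_{\mathbb C})_o$. Representations are orbitally continuous homomorphisms; irreducible = no fixed point in $\mathbf H^\infty_{\mathbb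 C}\cup\partial\mathbf H^\infty_{\mathbb C}$, no invariant pair of boundary points, and no proper invariant complex hyperbolic subspace (projectivization of a closed complex subspace of signature $(1,m')$). For such $\rho$, $\rho(P)$ fixes a unique $\eta_1\in\partial\mathbf H^\infty_{\mathbb C}$ and $\eta_2$ denotes the other endpoint of the common axis of the hyperbolic isometries $\rho(g(\lambda,0))$, $\lambda\ne1$; fix isotropic representatives (same names) with $B(\eta_1,\eta_2)=1$, let $E=\eta_1^\perp\cap\eta_2^\perp$, $\langle u,v\rangle:=B(u,v)$ for $u,v\in E$ and $|u|^2:=\langle u,u\rangle$. *)

(* Defs.v *)
From HB Require Import structures.
From mathcomp Require Import all_boot all_order all_algebra.
From mathcomp Require Import complex.
From mathcomp Require Import reals.
Set Implicit Arguments. Unset Strict Implicit. Unset Printing Implicit Defensive.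
Import Order.TTheory GRing.Theory Num.Theory.
Local Open Scope ring_scope.
Local Open Scope complex_scope.

Definition iC {R : realType} : R[i] := complex.Complex 0 1.

Section HermitianSpace.
Variable R : realType.
Local Notation C := R[i].
Variable V : lmodType C.

Definition hermitian_form (B : V -> V -> C) : Prop :=
  (forall (a : C) (u v w : V), B (a *: u + v) w = a * B u w + B v w) /\
  (forall u w : V, B w u = (B u w)^*).

Variable B : V -> V -> C.


Definition cabs (z : C) : R := Num.sqrt (complex.Re z ^+ 2 + complex.Im z ^+ 2).

Definition sqB (v : V) : R := complex.Re (B v v).

(** Given a vector e with B(e,e)=1, the Hilbert (squared) norm
    |B(v,e)|^2 - B(w,w) where v = B(v,e) e + w, w in e^perp;
    this equals 2|B(v,e)|^2 - B(v,v).  It defines the topology of H. *)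
Definition norm2 (e v : V) : R := 2 * (cabs (B v e)) ^+ 2 - sqB v.

Definition converges (e : V) (u : nat -> V) (v : V) : Prop :=
  forall eps : R, 0 < eps -> exists N : nat, forall n, (N <= n)%N ->
    norm2 e (u n - v) < eps.

Definition cauchy (e : V) (u : nat -> V) : Prop :=
  forall eps : R, 0 < eps -> exists N : nat, forall n m, (N <= n)%N -> (N <= m)%N ->
    norm2 e (u n - u m) < eps.

(** (H,B) is a separable complex Hilbert space with a strongly non-degenerate
    Hermitian form of signature (1,infinity): H = C e (+) e^perp with
    B(e,e) = 1, -B positive definite and complete on e^perp, e^perp of
    infinite (countable) dimension, H separable. *)
Definition strongly_nondeg_sig_1_inf (e : V) : Prop :=
  [/\ B e e = 1,
      (forall w, B w e = 0 -> w <> 0 -> sqB w < 0),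
      (forall u : nat -> V, cauchy e u -> exists v, converges e u v),
      (exists s : nat -> V, forall v (eps : R), 0 < eps ->
          exists n, norm2 e (v - s n) < eps) &
      (forall n : nat, exists w : 'I_n -> V,
          (forall i, B (w i) e = 0) /\
          (forall i j, B (w i) (w j) = if i == j then -1 else 0))].

Definition unitaryB (T : V -> V) : Prop :=
  [/\ (forall (a : C) u v, T (a *: u + v) = a *: T u + T v),
      bijective T &
      (forall u v, B (T u) (T v) = B u v)].

Definition unitaryB_on (E : V -> Prop) (T : V -> V) : Prop :=
  [/\ (forall u, E u -> E (T u)),
      (forall (a : C) u v, E u -> E v -> T (a *: u + v) = a *: T u + T v),
      (forall u v, E u -> E v -> B (T u) (T v) = B u v) &
      (forall v, E v -> exists2 u, E u & T u = v)].

(** [x] = [y] as points of the projective space *)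
Definition same_line (x y : V) : Prop := exists mu : C, x = mu *: y.

Definition isotropic (x : V) : Prop := x <> 0 /\ B x x = 0.

(** square of cosh of the hyperbolic distance between [v] and [w] *)
Definition cosh2_dist (v w : V) : R := (cabs (B v w)) ^+ 2 / (sqB v * sqB w).

Definition Jmx : 'M[C]_2 := \matrix_(i < 2, j < 2)
  (if i == j then (if (i : nat) == 0%N then 1 else -1) else 0).

Definition adjmx (g : 'M[C]_2) : 'M[C]_2 := (map_mx (@conjc R) g)^T.

Definition SU11 (g : 'M[C]_2) : Prop := adjmx g *m Jmx *m g = Jmx /\ \det g = 1.

Definition mx22 (a b c d : C) : 'M[C]_2 := \matrix_(i < 2, j < 2)
  (if (i : nat) == 0%N then (if (j : nat) == 0%N then a else b)
   else (if (j : nat) == 0%N then c else d)).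

(** change of basis: columns xi_1 = (e1+e2)/sqrt2, xi_2 = (e1-e2)/sqrt2 ;
    it is its own inverse *)
Definition Xi : 'M[C]_2 :=
  ((Num.sqrt (2 : R))^-1)%:C *: mx22 1 1 1 (-1).

(** g(lambda,b): matrix (lambda, i b ; 0, lambda^-1) in the basis (xi_1, xi_2),
    written in the standard basis (e1, e2). *)
Definition gP (l b : R) : 'M[C]_2 :=
  Xi *m mx22 l%:C (iC * b%:C) 0 (l^-1)%:C *m Xi.

(** A homomorphism PU(1,1) = SU(1,1)/{+-1} -> PU(B) = U(B)/S^1, given by a
    choice of unitaryB lifts [rho g] (g in SU(1,1)), which is orbitally
    continuous for the hyperbolic metric. *)
Definition proj_rep (rho : 'M[C]_2 -> V -> V) : Prop :=
  [/\ (forall g, SU11 g -> unitaryB (rho g)),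
      (forall g h, SU11 g -> SU11 h -> exists2 mu : C, cabs mu = 1 &
          forall v, rho (g *m h) v = mu *: rho g (rho h v)),
      (exists2 mu : C, cabs mu = 1 & forall v, rho (-1)%:M v = mu *: v) &
      (forall v, 0 < sqB v -> forall g0, SU11 g0 -> forall eps : R, 0 < eps ->
          exists2 d : R, 0 < d & forall g, SU11 g ->
            (forall i j, cabs (g i j - g0 i j) < d) ->
            cosh2_dist (rho g v) (rho g0 v) < 1 + eps)].

Definition subspaceP (W : V -> Prop) : Prop :=
  W 0 /\ forall (a : C) u v, W u -> W v -> W (a *: u + v).

Definition closed_in (e : V) (W : V -> Prop) : Prop :=
  forall u v, (forall n, W (u n)) -> converges e u v -> W v.

(** closed complex subspaceP of signature (1,m') (some m'):
    W = C p (+) (W cap p^perp), B(p,p) > 0, B negative definite on W cap p^perp *)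
Definition hyp_subspace (e : V) (W : V -> Prop) : Prop :=
  [/\ subspaceP W, closed_in e W &
      exists p, [/\ W p, 0 < sqB p &
                    forall w, W w -> B w p = 0 -> w <> 0 -> sqB w < 0]].

Definition irreducible_rep (e : V) (rho : 'M[C]_2 -> V -> V) : Prop :=
  [/\ (* no fixed point in H^oo or its boundary *)
      ~ (exists v, [/\ v <> 0, 0 <= sqB v &
            forall g, SU11 g -> same_line (rho g v) v]),
      (* no invariant pair of boundary points *)
      ~ (exists v w, [/\ isotropic v, isotropic w, ~ same_line w v &
            forall g, SU11 g ->
              (same_line (rho g v) v /\ same_line (rho g w) w) \/
              (same_line (rho g v) w /\ same_line (rho g w) v)]) &
      (* no proper invariant complex hyperbolic subspaceP *)
      ~ (exists W : V -> Prop, [/\ hyp_subspace e W, (exists v, ~ W v) &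
            forall g, SU11 g -> forall w, W w -> W (rho g w)])].

(** T (a lift of) a hyperbolic isometry whose axis has endpoints [x], [y]:
    T fixes [x], [y] and translates the geodesic between them by a nonzero
    amount (T x = a x with |a| <> 1). *)
Definition hyperbolic_axis (T : V -> V) (x y : V) : Prop :=
  [/\ isotropic x, isotropic y, ~ same_line y x, same_line (T y) y &
      exists2 a : C, T x = a *: x & cabs a != 1].

Definition contP_V (e : V) (f : R -> R -> V) : Prop :=
  forall l0 b0 : R, 0 < l0 -> forall eps : R, 0 < eps ->
    exists2 d : R, 0 < d & forall l b : R, 0 < l ->
      `|l - l0| < d -> `|b - b0| < d -> norm2 e (f l b - f l0 b0) < eps.

End HermitianSpace.

Definition contP_R (R : realType) (f : R -> R -> R) : Prop :=
  forall l0 b0 : R, 0 < l0 -> forall eps : R, 0 < eps ->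
    exists2 d : R, 0 < d & forall l b : R, 0 < l ->
      `|l - l0| < d -> `|b - b0| < d -> `|f l b - f l0 b0| < eps.

Definition cont_iso_pos (R : realType) (chi : R -> R) : Prop :=
  [/\ (forall x, 0 < x -> 0 < chi x),
      (forall x y, 0 < x -> 0 < y -> chi (x * y) = chi x * chi y),
      (forall x y, 0 < x -> 0 < y -> chi x = chi y -> x = y),
      (forall y, 0 < y -> exists2 x, 0 < x & chi x = y) &
      (forall x0, 0 < x0 -> forall eps : R, 0 < eps -> exists2 d : R, 0 < d &
          forall x, 0 < x -> `|x - x0| < d -> `|chi x - chi x0| < eps)].

(* Main.v *)
Require Import Defs.
From HB Require Import structures.
From mathcomp Require Import all_boot all_order all_algebra.
From mathcomp Require Import complex.
From mathcomp Require Import reals.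
From mathcomp Require Import all_classical all_reals all_analysis.
From mathcomp Require Import ring lra.
Set Implicit Arguments. Unset Strict Implicit. Unset Printing Implicit Defensive.
Import Order.TTheory GRing.Theory Num.Theory.
Import numFieldNormedType.Exports.
Local Open Scope ring_scope.
Local Open Scope complex_scope.

Section Basic.
Variable R : realType.
Local Notation C := R[i].

Definition nsq (z : C) : R := complex.Re z ^+ 2 + complex.Im z ^+ 2.

Lemma nsq_ge0 z : 0 <= nsq z.
Proof. by rewrite /nsq addr_ge0 // sqr_ge0. Qed.

Lemma mulJ (z : C) : z * (conjc z) = (nsq z)%:C.
Proof. case: z => a b; rewrite /nsq /=; apply/eqP; rewrite eq_complex /=; apply/andP; split; apply/eqP; ring. Qed.

Lemma nsqM (x y : C) : nsq (x * y) = nsq x * nsq y.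
Proof. case: x => a b; case: y => c d; rewrite /nsq /=; ring. Qed.

Lemma nsqJ (x : C) : nsq ((conjc x)) = nsq x.
Proof. case: x => a b; rewrite /nsq /=; ring. Qed.

Lemma nsqN (x : C) : nsq (- x) = nsq x.
Proof. case: x => a b; rewrite /nsq /=; ring. Qed.

Lemma nsqB (x y : C) : nsq (x - y) <= 2 * nsq x + 2 * nsq y.
Proof. case: x => a b; case: y => c d; rewrite /nsq /=.
have := sqr_ge0 (a + c); have := sqr_ge0 (b + d). nra. Qed.

Lemma nsqD (x y : C) : nsq (x + y) <= 2 * nsq x + 2 * nsq y.
Proof. by have := nsqB x (- y); rewrite opprK nsqN. Qed.

Lemma cabs2 (z : C) : cabs z ^+ 2 = nsq z.
Proof. by rewrite /cabs sqr_sqrtr // nsq_ge0. Qed.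

Lemma cabsM (x y : C) : cabs (x * y) = cabs x * cabs y.
Proof. by rewrite /cabs -/(nsq _) -/(nsq x) -/(nsq y) nsqM sqrtrM // nsq_ge0. Qed.

Lemma Re_rC (x : R) (z : C) : complex.Re (x%:C * z) = x * complex.Re z.
Proof. case: z => a b /=; ring. Qed.
Lemma Im_rC (x : R) (z : C) : complex.Im (x%:C * z) = x * complex.Im z.
Proof. case: z => a b /=; ring. Qed.
Lemma ReD (x y : C) : complex.Re (x + y) = complex.Re x + complex.Re y.
Proof. by case: x; case: y. Qed.
Lemma ImD (x y : C) : complex.Im (x + y) = complex.Im x + complex.Im y.
Proof. by case: x; case: y. Qed.
Lemma ReN (x : C) : complex.Re (- x) = - complex.Re x.
Proof. by case: x. Qed.
Lemma ImN (x : C) : complex.Im (- x) = - complex.Im x.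
Proof. by case: x. Qed.
Lemma ReJ (x : C) : complex.Re ((conjc x)) = complex.Re x.
Proof. by case: x. Qed.
Lemma ImJ (x : C) : complex.Im ((conjc x)) = - complex.Im x.
Proof. by case: x. Qed.
Lemma Re_le_nsq (x : C) : complex.Re x ^+ 2 <= nsq x.
Proof. rewrite /nsq; have := sqr_ge0 (complex.Im x); lra. Qed.
Lemma Im_le_nsq (x : C) : complex.Im x ^+ 2 <= nsq x.
Proof. rewrite /nsq; have := sqr_ge0 (complex.Re x); lra. Qed.
Lemma pos_real (z : C) : 0 < z -> z = (complex.Re z)%:C.
Proof. case: z => a b; rewrite ltcE /= => /andP[/eqP -> _]; by []. Qed.
Lemma pos_Re (z : C) : 0 < z -> 0 < complex.Re z.
Proof. case: z => a b; rewrite ltcE /= => /andP[_ ->]; by []. Qed.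
Lemma conj_real (x : R) : (conjc (x%:C)) = x%:C.
Proof. by rewrite /= oppr0. Qed.
Lemma herm_Im0 (z : C) : z = (conjc z) -> complex.Im z = 0.
Proof. case: z => a b /= [] h; lra. Qed.
Lemma conjD (x y : C) : (conjc (x + y)) = (conjc x) + (conjc y).
Proof. case: x => a b; case: y => c d /=; apply/eqP; rewrite eq_complex /=; apply/andP; split; apply/eqP; ring. Qed.
Lemma conjN (x : C) : (conjc (- x)) = - (conjc x).
Proof. case: x => a b /=; apply/eqP; rewrite eq_complex /=; apply/andP; split; apply/eqP; ring. Qed.
Lemma conjB (x y : C) : (conjc (x - y)) = (conjc x) - (conjc y).
Proof. case: x => a b; case: y => c d /=; apply/eqP; rewrite eq_complex /=; apply/andP; split; apply/eqP; ring. Qed.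
Lemma conjM (x y : C) : (conjc (x * y)) = (conjc x) * (conjc y).
Proof. case: x => a b; case: y => c d /=; apply/eqP; rewrite eq_complex /=; apply/andP; split; apply/eqP; ring. Qed.
Lemma conj2 : (conjc (2%:R : C)) = 2%:R.
Proof. by apply/eqP; rewrite eq_complex /= addr0 oppr0 !eqxx. Qed.
Lemma conj0 : conjc (0 : C) = 0.
Proof. by apply/eqP; rewrite eq_complex /= oppr0 !eqxx. Qed.
Lemma conj1 : conjc (1 : C) = 1.
Proof. by apply/eqP; rewrite eq_complex /= oppr0 !eqxx. Qed.
End Basic.

Section Mat.
Variable R : realType.
Local Notation C := R[i].

Lemma mx22M (a b c d a' b' c' d' : C) : mx22 a b c d *m mx22 a' b' c' d' =
  mx22 (a*a' + b*c') (a*b' + b*d') (c*a' + d*c') (c*b' + d*d').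
Proof.
apply/matrixP => i j; rewrite !mxE !big_ord_recr big_ord0 /= !mxE add0r.
by case: i => [[|[|i]] hi]; case: j => [[|[|j]] hj].
Qed.

Lemma Xi2 : Xi R *m Xi R = 1%:M.
Proof.
rewrite /Xi -scalemxAl -scalemxAr scalerA mx22M.
set s := (Num.sqrt (2 : R))^-1.
have s2 : s * s * 2 = 1.
  rewrite /s -invfM -expr2 sqr_sqrtr ?mulVf // ?pnatr_eq0 // ler0n.
apply/matrixP => i j; rewrite !mxE.
case: i => [[|[|i]] hi]; case: j => [[|[|j]] hj] //=; apply/eqP; rewrite eq_complex /=;
  apply/andP; split; apply/eqP; rewrite ?mulr0 ?mul0r ?addr0 ?subr0; try lra.
Qed.

Lemma gP_mul (l b l' b' : R) : l != 0 -> l' != 0 ->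
  gP l b *m gP l' b' = gP (l * l') (l * b' + b / l').
Proof.
move=> l0 l'0; rewrite /gP !mulmxA.
set M := mx22 _ _ _ _; set M' := mx22 _ _ _ _.
rewrite -[Xi R *m M *m Xi R *m Xi R]mulmxA Xi2 mulmx1 -[Xi R *m M *m M']mulmxA.
congr (_ *m _ *m _); rewrite /M /M' mx22M.
apply/matrixP => i j; rewrite !mxE.
case: i => [[|[|i]] hi]; case: j => [[|[|j]] hj] //=; apply/eqP; rewrite eq_complex /=;
  apply/andP; split; apply/eqP; rewrite ?mulr0 ?mul0r ?addr0 ?subr0 ?add0r //.
all: try field; by rewrite ?l0 ?l'0.
Qed.
End Mat.

Section Form.
Variable R : realType.
Local Notation C := R[i].
Variable V : lmodType C.
Variable B : V -> V -> C.
Hypothesis hB : hermitian_form B.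

Lemma BDl u v w : B (u + v) w = B u w + B v w.
Proof. by have := hB.1 1 u v w; rewrite scale1r mul1r. Qed.
Lemma B0l w : B 0 w = 0.
Proof. by have := BDl 0 0 w; rewrite addr0 => /eqP; rewrite -subr_eq subrr eq_sym => /eqP. Qed.
Lemma BZl a u w : B (a *: u) w = a * B u w.
Proof. by have := hB.1 a u 0 w; rewrite !addr0 B0l addr0. Qed.
Lemma BNl u w : B (- u) w = - B u w.
Proof. by rewrite -scaleN1r BZl mulN1r. Qed.
Lemma BBl u v w : B (u - v) w = B u w - B v w.
Proof. by rewrite BDl BNl. Qed.
Lemma BC u w : B w u = (conjc (B u w)).
Proof. exact: hB.2. Qed.
Lemma BDr u v w : B w (u + v) = B w u + B w v.
Proof. by rewrite BC BDl conjD -!BC. Qed.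
Lemma BZr a u w : B w (a *: u) = (conjc a) * B w u.
Proof. by rewrite BC BZl conjM -BC. Qed.
Lemma B0r w : B w 0 = 0.
Proof. by rewrite BC B0l conj0. Qed.
Lemma BNr u w : B w (- u) = - B w u.
Proof. by rewrite BC BNl conjN -BC. Qed.
Lemma BBr u v w : B w (u - v) = B w u - B w v.
Proof. by rewrite BDr BNr. Qed.
Lemma Bself_Im v : complex.Im (B v v) = 0.
Proof. by apply: herm_Im0; rewrite -BC. Qed.

Variable e : V.
Hypothesis hsig : strongly_nondeg_sig_1_inf B e.

Definition hip (v w : V) : C := 2%:R * B v e * (conjc (B w e)) - B v w.

Lemma n2_hip v : norm2 B e v = complex.Re (hip v v).
Proof.
rewrite /norm2 /hip cabs2 ReD ReN -mulrA mulJ /sqB; congr (_ - _).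
rewrite /=; ring.
Qed.

Lemma hipDl u v w : hip (u + v) w = hip u w + hip v w.
Proof. rewrite /hip !BDl; ring. Qed.
Lemma hipZl a u w : hip (a *: u) w = a * hip u w.
Proof. rewrite /hip !BZl; ring. Qed.
Lemma hipDr u v w : hip w (u + v) = hip w u + hip w v.
Proof. rewrite /hip !BDl !BDr conjD; ring. Qed.
Lemma hipZr a u w : hip w (a *: u) = (conjc a) * hip w u.
Proof. rewrite /hip !BZl !BZr conjM; ring. Qed.
Lemma hipC u w : hip w u = (conjc (hip u w)).
Proof. rewrite /hip conjB !conjM conjcK -!BC conj2; ring. Qed.

Lemma n2_ge_nsq v : nsq (B v e) <= norm2 B e v.
Proof.
have [Bee Bneg _ _ _] := hsig.
have [w we hv] : exists2 w, B w e = 0 & v = B v e *: e + w.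
  exists (v - B v e *: e); first by rewrite BBl BZl Bee mulr1 subrr.
  by rewrite addrC subrK.
move: hv; set a := B v e => hv.
have Bvv : B v v = (nsq a)%:C + B w w.
  rewrite hv BDl !BDr !BZl !BZr Bee (BC w e) we.
  rewrite -mulJ conj0; ring.
rewrite /norm2 cabs2 /sqB Bvv ReD /= -/a.
suff : complex.Re (B w w) <= 0 by lra.
have [->|wn0] := eqVneq w 0; first by rewrite B0l.
by apply/ltW; apply: Bneg => //; apply/eqP.
Qed.

Lemma n2_ge0 v : 0 <= norm2 B e v.
Proof. exact: le_trans (nsq_ge0 _) (n2_ge_nsq v). Qed.

Lemma n2Z a v : norm2 B e (a *: v) = nsq a * norm2 B e v.
Proof. by rewrite !n2_hip hipZl hipZr mulrA mulJ Re_rC. Qed.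

Lemma nsq1 : nsq (1 : C) = 1.
Proof. rewrite /nsq; have -> : complex.Re (1 : C) = 1 by []; have -> : complex.Im (1 : C) = 0 by []; ring. Qed.

Lemma conjN1 : conjc (-1 : C) = -1.
Proof. by rewrite conjN conj1. Qed.

Lemma n2N v : norm2 B e (- v) = norm2 B e v.
Proof. by rewrite -scaleN1r n2Z nsqN nsq1 mul1r. Qed.

Lemma hip_par x y : hip (x + y) (x + y) + hip (x - y) (x - y) = 2%:R * hip x x + 2%:R * hip y y.
Proof.
rewrite -scaleN1r !hipDl !hipDr !hipZl !hipZr conjN1; ring.
Qed.

Lemma Re2 (z : C) : complex.Re (2%:R * z) = 2 * complex.Re z.
Proof. case: z => a b; rewrite /=; ring. Qed.

Lemma n2D x y : norm2 B e (x + y) <= 2 * norm2 B e x + 2 * norm2 B e y.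
Proof.
have h := n2_ge0 (x - y).
move: h; rewrite !n2_hip; move: (hip_par x y).
move: (hip (x + y) (x + y)) (hip (x - y) (x - y)) (hip x x) (hip y y) => A A' X Y.
move=> /(congr1 (@complex.Re R)); rewrite !ReD !Re2; lra.
Qed.

Lemma n2B x y : norm2 B e (x - y) <= 2 * norm2 B e x + 2 * norm2 B e y.
Proof. by have := n2D x (- y); rewrite n2N. Qed.

Lemma hip_exp x y (s : C) : hip (x - s *: y) (x - s *: y) =
  hip x x - conjc s * hip x y - s * hip y x + s * conjc s * hip y y.
Proof. rewrite -scaleN1r !hipDl !hipDr !hipZl !hipZr conjN1; ring. Qed.

Lemma RCM (x y : R) : (x * y)%:C = x%:C * y%:C :> C.
Proof. apply/eqP; rewrite eq_complex /=; apply/andP; split; apply/eqP; ring. Qed.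
Lemma RC2 : (2 : R)%:C = 2%:R :> C.
Proof. by apply/eqP; rewrite eq_complex /= addr0 !eqxx. Qed.
Lemma ReC (x : R) : complex.Re (x%:C) = x. Proof. by []. Qed.

Lemma ReAux (X Y : C) (p q : R) : complex.Re (X - p%:C + q%:C * Y) = complex.Re X - p + q * complex.Re Y.
Proof. by rewrite !ReD ReN ReC Re_rC. Qed.

Lemma CS x y : nsq (hip x y) <= norm2 B e x * norm2 B e y.
Proof.
set h := hip x y; set N := nsq h; set a := norm2 B e x; set b := norm2 B e y.
have hN : h * conjc h = N%:C by rewrite mulJ.
have key : forall t : R, 0 <= a - 2 * t * N + t ^+ 2 * N * b.
  move=> t; have := n2_ge0 (x - (t%:C * h) *: y).
  have E : hip (x - (t%:C * h) *: y) (x - (t%:C * h) *: y) =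
     hip x x - (2 * t * N)%:C + (t * t * N)%:C * hip y y.
    rewrite hip_exp (hipC x y) -/h conjM conj_real !RCM RC2 -hN; ring.
  rewrite n2_hip E ReAux -!n2_hip // expr2.
have N0 : 0 <= N by apply: nsq_ge0.
have b0 : 0 <= b by apply: n2_ge0.
have [bz|bp] := eqVneq b 0.
  rewrite bz mulr0 leNgt; apply/negP => Np.
  have := key ((a + 1) / (2 * N)); rewrite bz mulr0 addr0.
  have -> : 2 * ((a + 1) / (2 * N)) * N = a + 1 by field; rewrite lt0r_neq0.
  lra.
have bpos : 0 < b by rewrite lt0r bp b0.
have := key (b^-1).
have -> : 2 * b^-1 * N = 2 * (N / b) by ring.
have -> : b^-1 ^+ 2 * N * b = N / b by field.
move=> hk; have : N / b <= a by lra.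
by rewrite ler_pdivrMr // mulrC.
Qed.

Definition KB y := 8 * nsq (B y e) + 2 * norm2 B e y + 1.

Lemma KB_gt0 y : 0 < KB y.
Proof. rewrite /KB; have := nsq_ge0 (B y e); have := n2_ge0 y; lra. Qed.

Lemma Bbound x y : nsq (B x y) <= KB y * norm2 B e x.
Proof.
have eq : B x y = (2%:R * B x e * conjc (B y e)) - hip x y by rewrite /hip; ring.
rewrite eq; apply: le_trans (nsqB _ _) _.
rewrite !nsqM nsqJ.
have h1 := n2_ge_nsq x; have h2 := CS x y; have h3 := n2_ge0 x; have h4 := n2_ge0 y.
have h5 := nsq_ge0 (B y e).
have -> : nsq (2%:R : C) = 4.
  rewrite /nsq; have -> : complex.Re (2%:R : C) = 2 by []. have -> : complex.Im (2%:R : C) = 0 by rewrite /= addr0.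
  ring.
rewrite /KB; nra.
Qed.

End Form.

Section Analysis.
Local Open Scope classical_set_scope.
Lemma cont_at (R : realType) (f : R -> R) x0 :
  (forall eps : R, 0 < eps -> exists2 d : R, 0 < d &
          forall x, 0 < x -> `|x - x0| < d -> `|f x - f x0| < eps) ->
  0 < x0 -> {for x0, continuous f}.
Proof.
move=> hc x0p; apply/cvgrPdist_lt => eps eps0.
have [d d0 hd] := hc eps eps0.
apply/nbhs_normP; exists (Num.min d x0) => /=; first by rewrite lt_min d0 x0p.
move=> y /=; rewrite lt_min => /andP[h1 h2].
rewrite distrC; apply: hd; last by rewrite distrC.
have : x0 - y <= `|x0 - y| by apply: ler_norm.
move: h2. lra.
Qed.

Lemma bern (R : realType) (q : R) n : 1 <= q -> 1 + n%:R * (q - 1) <= q ^+ n.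
Proof.
move=> q1; elim: n => [|n IH]; first by rewrite mul0r addr0 expr0.
rewrite exprS -natr1.
have h0 : 0 <= n%:R * (q - 1) :> R by apply: mulr_ge0; [apply: ler0n| lra].
have : q * (1 + n%:R * (q - 1)) <= q * q ^+ n by apply: ler_wpM2l; lra.
nra.
Qed.

Lemma pow_big (R : realType) (q M : R) : 1 < q -> exists n : nat, M < q ^+ n.
Proof.
move=> q1.
have hM : 0 <= `|M| / (q - 1) by apply: divr_ge0 => //; lra.
have := archi_boundP hM; set n := Num.Def.archi_bound _ => hn.
exists n; have := @bern R q n (ltW q1).
have : `|M| < n%:R * (q - 1) by rewrite -ltr_pdivrMr; lra.
have := ler_norm M; lra.
Qed.

Lemma ivt_pos (R : realType) (chi : R -> R) :
  (forall x0, 0 < x0 -> forall eps : R, 0 < eps -> exists2 d : R, 0 < d &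
          forall x, 0 < x -> `|x - x0| < d -> `|chi x - chi x0| < eps) ->
  forall u v y, 0 < u -> 0 < v -> chi u <= y <= chi v -> exists2 x, 0 < x & chi x = y.
Proof.
move=> hc u v y u0 v0 /andP[h1 h2].
have key : forall a b, 0 < a -> a <= b -> Num.min (chi a) (chi b) <= y <= Num.max (chi a) (chi b) ->
   exists2 x, 0 < x & chi x = y.
  move=> a b a0 ab hy.
  have hcw : {within `[a, b], continuous chi}.
    apply: continuous_in_subspaceT => x; rewrite inE /= in_itv /= => /andP[xa _].
    by apply: cont_at; [apply: hc; lra | lra].
  have [x xab fx] := IVT ab hcw hy.
  exists x => //; move: xab; rewrite in_itv /= => /andP[+ _]; lra.
case: (leP u v) => uv.
  apply: (key u v) => //; apply/andP; split.
    by rewrite ge_min h1.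
  by rewrite le_max h2 orbT.
apply: (key v u) => //; first exact: ltW.
apply/andP; split; first by rewrite ge_min h1 orbT.
by rewrite le_max h2.
Qed.

Lemma hom_surj (R : realType) (chi : R -> R) :
  (forall x, 0 < x -> 0 < chi x) ->
  (forall x y, 0 < x -> 0 < y -> chi (x * y) = chi x * chi y) ->
  (forall x0, 0 < x0 -> forall eps : R, 0 < eps -> exists2 d : R, 0 < d &
          forall x, 0 < x -> `|x - x0| < d -> `|chi x - chi x0| < eps) ->
  forall t, 0 < t -> chi t != 1 ->
  forall y, 0 < y -> exists2 x, 0 < x & chi x = y.
Proof.
move=> hpos hmul hcont t t0 ht y y0.
have c1 : chi 1 = 1.
  have := hmul 1 1 ltr01 ltr01; rewrite mulr1 => h.
  have := hpos 1 ltr01; move: h; set a := chi 1 => h ha.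
  by apply: (mulfI (lt0r_neq0 ha)); rewrite mulr1 -h.
have [s s0 sq] : exists2 s, 0 < s & 1 < chi s.
  have := hpos t t0; case: (ltgtP (chi t) 1) => [lt1|gt1|eq1] cpos.
  - exists t^-1; first by rewrite invr_gt0.
    have := hmul t t^-1 t0; rewrite invr_gt0 divff ?lt0r_neq0 // c1 => /(_ t0) h.
    have hi : 0 < chi t^-1 by apply: hpos; rewrite invr_gt0.
    nra.
  - by exists t.
  - by move: ht; rewrite eq1 eqxx.
have powchi : forall n, chi (s ^+ n) = chi s ^+ n.
  elim=> [|n IH]; first by rewrite !expr0.
  by rewrite !exprS hmul ?exprn_gt0 // IH.
have powchiV : forall n, chi ((s ^+ n)^-1) = (chi s ^+ n)^-1.
  move=> n; have sn : 0 < s ^+ n by apply: exprn_gt0.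
  have h := hmul (s ^+ n) (s ^+ n)^-1 sn; rewrite invr_gt0 divff ?lt0r_neq0 // c1 in h.
  have := h sn; rewrite powchi => h'.
  have cn : 0 < chi s ^+ n by apply: exprn_gt0; lra.
  by apply: (mulfI (lt0r_neq0 cn)); rewrite -h' divff // lt0r_neq0.
have [n1 hn1] := @pow_big R _ (y + y^-1) sq.
have yi : 0 < y^-1 by rewrite invr_gt0.
have := hn1; rewrite -powchi => hb.
have ha : chi ((s ^+ n1)^-1) < y.
  rewrite powchiV.
  have cb : 0 < chi s ^+ n1 by apply: exprn_gt0; lra.
  set X := chi s ^+ n1 in cb *.
  have hX : X - y^-1 > 0 by have := hn1; rewrite -/X; lra.
  have Xi : 0 < X^-1 by rewrite invr_gt0.
  have := mulr_gt0 (mulr_gt0 hX Xi) y0.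
  have e1 : X * X^-1 = 1 by rewrite divff // lt0r_neq0.
  have e2 : y^-1 * y = 1 by rewrite mulVf // lt0r_neq0.
  have -> : (X - y^-1) * X^-1 * y = y - X^-1.
    by field; rewrite ?lt0r_neq0 //; apply/andP; split; rewrite lt0r_neq0.
  lra.
have sn : 0 < s ^+ n1 by apply: exprn_gt0.
apply: (@ivt_pos R chi hcont ((s ^+ n1)^-1) (s ^+ n1)); rewrite ?invr_gt0 //.
apply/andP; split; first lra.
have : 0 < y^-1 by rewrite invr_gt0.
lra.
Qed.

End Analysis.

Section Main.
Variable R : realType.
Local Notation C := R[i].
Variable V : lmodType C.
Variable B : V -> V -> C.
Hypothesis hB : hermitian_form B.
Variable e : V.
Hypothesis hsig : strongly_nondeg_sig_1_inf B e.
Variable rho : 'M[C]_2 -> V -> V.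
Variables eta1 eta2 : V.
Hypothesis heta1 : isotropic B eta1.
Hypothesis hfix1 : forall l b : R, 0 < l -> same_line (rho (gP l b) eta1) eta1.
Hypothesis haxis : forall l : R, 0 < l -> l != 1 -> hyperbolic_axis B (rho (gP l 0)) eta1 eta2.
Hypothesis hnorm12 : B eta1 eta2 = 1.
Variable L : R -> R -> V -> V.
Hypothesis hLU : forall l b : R, 0 < l -> unitaryB B (L l b).
Hypothesis hLhom : forall l b l' b' l'' b'' : R, 0 < l -> 0 < l' -> 0 < l'' ->
       gP l b *m gP l' b' = gP l'' b'' ->
       forall v, L l'' b'' v = L l b (L l' b' v).
Hypothesis hLlift : forall l b : R, 0 < l -> exists2 mu : R[i], cabs mu = 1 &
       forall v, L l b v = mu *: rho (gP l b) v.
Hypothesis hLcont : forall v, contP_V B e (fun l b => L l b v).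
Hypothesis hLnorm : forall l b : R, 0 < l -> 0 < B (L l b eta1) eta2.

Local Notation e1 := eta1.
Local Notation e2 := eta2.

Lemma two_gt0 : 0 < 2 :> R. Proof. by []. Qed.
Lemma two_ne1 : 2 != 1 :> R. Proof. by rewrite eq_sym lt_eqF // ltr1n. Qed.

Lemma B11 : B e1 e1 = 0. Proof. by case: heta1. Qed.
Lemma B22 : B e2 e2 = 0.
Proof. by have [_ [_ ->] _ _ _] := haxis two_gt0 two_ne1. Qed.
Lemma B21 : B e2 e1 = 1.
Proof. by rewrite (BC hB) hnorm12 conj1. Qed.

Section Lin.
Variables (l b : R).
Hypothesis l0 : 0 < l.
Lemma LD u v : L l b (u + v) = L l b u + L l b v.
Proof. by have [h _ _] := hLU b l0; have := h 1 u v; rewrite !scale1r. Qed.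
Lemma L0 : L l b 0 = 0.
Proof. by have := LD 0 0; rewrite addr0 => /eqP; rewrite -subr_eq subrr eq_sym => /eqP. Qed.
Lemma LZ a u : L l b (a *: u) = a *: L l b u.
Proof. by have [h _ _] := hLU b l0; have := h a u 0; rewrite !addr0 L0 addr0. Qed.
Lemma LN u : L l b (- u) = - L l b u.
Proof. by rewrite -scaleN1r LZ scaleN1r. Qed.
Lemma LB u v : L l b (u - v) = L l b u - L l b v.
Proof. by rewrite LD LN. Qed.
Lemma LBB u v : B (L l b u) (L l b v) = B u v.
Proof. by have [_ _ h] := hLU b l0; apply: h. Qed.
End Lin.

Lemma Lcomp l b l' b' l'' b'' : 0 < l -> 0 < l' -> l'' = l * l' -> b'' = l * b' + b / l' ->
  forall v, L l'' b'' v = L l b (L l' b' v).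
Proof.
move=> l0 l'0 -> ->; apply: hLhom => //; first exact: mulr_gt0.
by apply: gP_mul; rewrite lt0r_neq0.
Qed.

Lemma L10 v : L 1 0 v = v.
Proof.
have h := @Lcomp 1 0 1 0 1 0 ltr01 ltr01.
have [_ /bij_inj inj _] := hLU 0 (@ltr01 R).
apply: inj; rewrite -h //; first by rewrite mulr1.
by rewrite mulr0 mul0r addr0.
Qed.

Lemma line1 x : same_line x e1 -> x = B x e2 *: e1.
Proof. by case=> mu ->; rewrite (BZl hB) hnorm12 mulr1. Qed.
Lemma line2 x : same_line x e2 -> x = B x e1 *: e2.
Proof. by case=> mu ->; rewrite (BZl hB) B21 mulr1. Qed.

Lemma Le1_line l b : 0 < l -> L l b e1 = B (L l b e1) e2 *: e1.
Proof.
move=> l0; have [mu _ hmu] := hLlift b l0; have [m hm] := hfix1 b l0.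
by apply: line1; exists (mu * m); rewrite hmu hm scalerA.
Qed.

Lemma Le2_line l : 0 < l -> exists mu, L l 0 e2 = mu *: e2.
Proof.
move=> l0; have [->|l1] := eqVneq l 1; first by exists 1; rewrite L10 scale1r.
have [_ _ _ [m hm] _] := haxis l0 l1.
have [mu _ hmu] := hLlift 0 l0.
by exists (mu * m); rewrite hmu hm scalerA.
Qed.

Definition kappa l b := B (L l b e1) e2.

Lemma kappa_mul l b l' b' l'' b'' : 0 < l -> 0 < l' -> l'' = l * l' -> b'' = l * b' + b / l' ->
  kappa l'' b'' = kappa l' b' * kappa l b.
Proof.
move=> l0 l'0 h1 h2; rewrite /kappa (Lcomp l0 l'0 h1 h2) {1}(Le1_line b' l'0) LZ //.
by rewrite (BZl hB).
Qed.

Lemma kappa_ne0 l b : 0 < l -> kappa l b != 0.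
Proof. by move=> l0; rewrite lt0r_neq0 // hLnorm. Qed.

Lemma kappa1 b : kappa 1 b = 1.
Proof.
set s := Num.sqrt (2 : R).
have s0 : 0 < s by rewrite sqrtr_gt0.
have ss : s * s = 2 by rewrite -expr2 sqr_sqrtr.
have h1 : kappa s (s * b) = kappa 1 b * kappa s 0.
  by apply: kappa_mul => //; rewrite ?mulr1 // mul0r addr0.
have h2 : kappa s (s * b) = kappa s 0 * kappa 1 (2 * b).
  apply: kappa_mul => //; first by rewrite mul1r.
  by rewrite mul1r add0r -ss; field; rewrite lt0r_neq0.
have h3 : kappa 1 (2 * b) = kappa 1 b * kappa 1 b.
  by apply: kappa_mul => //; rewrite ?mulr1 // mul1r divr1; ring.
have hk : kappa 1 b = kappa 1 (2 * b).
  apply: (mulIf (kappa_ne0 0 s0)); rewrite -h1 h2; exact: mulrC.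
apply: (mulIf (kappa_ne0 b ltr01)); by rewrite mul1r -h3 -hk.
Qed.

Lemma kappa_l l b : 0 < l -> kappa l b = kappa l 0.
Proof.
move=> l0; rewrite (@kappa_mul l 0 1 (b / l) l b) //; first by rewrite kappa1 mul1r.
  by rewrite mulr1.
by rewrite mul0r addr0; field; rewrite lt0r_neq0.
Qed.

Definition chi l := complex.Re (kappa l 0).

Lemma kappa_chi l b : 0 < l -> kappa l b = (chi l)%:C.
Proof. by move=> l0; rewrite kappa_l //; apply: pos_real; apply: hLnorm. Qed.

Lemma chi_pos l : 0 < l -> 0 < chi l.
Proof. by move=> l0; apply: pos_Re; apply: hLnorm. Qed.

Lemma Le1 l b : 0 < l -> L l b e1 = (chi l)%:C *: e1.
Proof. by move=> l0; rewrite {1}Le1_line // -/(kappa l b) kappa_chi. Qed.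

Lemma RCinj (x y : R) : x%:C = y%:C :> C -> x = y.
Proof. by case. Qed.

Lemma chi_mul x y : 0 < x -> 0 < y -> chi (x * y) = chi x * chi y.
Proof.
move=> x0 y0; apply: RCinj; rewrite -[(chi (x * y))%:C](kappa_chi 0) ?mulr_gt0 //.
rewrite (@kappa_mul x 0 y 0 (x * y) 0) // ?mulr0 ?mul0r ?addr0 //.
by rewrite !kappa_chi // RCM mulrC.
Qed.

Lemma chi1 : chi 1 = 1.
Proof. by rewrite /chi kappa1. Qed.

Lemma cabs1 : cabs (1 : C) = 1.
Proof. by rewrite /cabs -/(nsq 1) nsq1 sqrtr1. Qed.

Lemma chi_ne1 l : 0 < l -> l != 1 -> chi l != 1.
Proof.
move=> l0 l1; have [_ _ _ _ [a ha na]] := haxis l0 l1.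
have [mu hmu1 hmu] := hLlift 0 l0.
have hk : kappa l 0 = mu * a by rewrite /kappa hmu ha scalerA (BZl hB) hnorm12 mulr1.
apply/negP => /eqP c1; move: na.
have : cabs (mu * a) = 1 by rewrite -hk kappa_chi // c1 cabs1.
by rewrite cabsM hmu1 mul1r => ->; rewrite eqxx.
Qed.

Lemma chi_inj x y : 0 < x -> 0 < y -> chi x = chi y -> x = y.
Proof.
move=> x0 y0 h.
have q0 : 0 < x / y by rewrite divr_gt0.
have : chi (x / y * y) = chi (x / y) * chi y by rewrite chi_mul.
rewrite divfK ?lt0r_neq0 // h => h'.
have c1 : chi (x / y) = 1.
  by apply: (mulIf (lt0r_neq0 (chi_pos y0))); rewrite -h' mul1r.
have [q1|qn1] := eqVneq (x / y) 1.
  by rewrite -[x](divfK (lt0r_neq0 y0)) q1 mul1r.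
by move: (chi_ne1 q0 qn1); rewrite c1 eqxx.
Qed.


Definition PE (v : V) : V := v - B v e2 *: e1 - B v e1 *: e2.

Lemma PE_1 v : B (PE v) e1 = 0.
Proof. by rewrite /PE !(BBl hB) !(BZl hB) B11 B21; ring. Qed.
Lemma PE_2 v : B (PE v) e2 = 0.
Proof. by rewrite /PE !(BBl hB) !(BZl hB) B22 hnorm12; ring. Qed.
Lemma B1PE v : B e1 (PE v) = 0.
Proof. by rewrite (BC hB) PE_1 conj0. Qed.
Lemma B2PE v : B e2 (PE v) = 0.
Proof. by rewrite (BC hB) PE_2 conj0. Qed.
Lemma PE_E u : B u e1 = 0 -> B u e2 = 0 -> PE u = u.
Proof. by move=> h1 h2; rewrite /PE h1 h2 !scale0r !subr0. Qed.
Lemma PE_Z a u : PE (a *: u) = a *: PE u.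
Proof. by rewrite /PE !(BZl hB) -!scalerA !scalerBr. Qed.
Lemma PE_D u v : PE (u + v) = PE u + PE v.
Proof.
rewrite /PE !(BDl hB) !scalerDl !opprD !addrA.
set a := _ *: e1; set b := _ *: e1; set c := _ *: e2; set d := _ *: e2.
by rewrite [u - a - c + v]addrC !addrA [v + u]addrC [u + v - a - c - b]addrAC.
Qed.


Lemma PE_N u : PE (- u) = - PE u.
Proof. by rewrite -scaleN1r PE_Z scaleN1r. Qed.
Lemma PE_B u v : PE (u - v) = PE u - PE v.
Proof. by rewrite PE_D PE_N. Qed.
Lemma PE_e1 : PE e1 = 0.
Proof. by rewrite /PE hnorm12 B11 scale1r scale0r !subr0 subrr. Qed.
Lemma PE_e2 : PE e2 = 0.
Proof. by rewrite /PE B22 B21 scale1r scale0r subr0 subrr. Qed.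
Lemma PE0 : PE 0 = 0.
Proof. have -> : (0 : V) = (0 : C) *: e1 by rewrite scale0r. by rewrite PE_Z !scale0r. Qed.

Lemma dec3 (v X Y : V) : v = X + Y + (v - X - Y).
Proof. by rewrite [X + Y + _]addrC addrA [v - X - Y + X]addrAC !subrK. Qed.

Lemma vdec v : v = B v e2 *: e1 + B v e1 *: e2 + PE v.
Proof. by rewrite /PE; apply: dec3. Qed.

Lemma Bdec v w : B v w = B v e2 * conjc (B w e1) + B v e1 * conjc (B w e2) + B (PE v) (PE w).
Proof.
have hv := vdec v; have hw := vdec w.
move: (PE v) (PE w) (PE_1 v) (PE_2 v) (PE_1 w) (PE_2 w) hv hw => pv pw pv1 pv2 pw1 pw2 hv hw.
rewrite {1}hv {1}hw.
rewrite !(BDl hB) !(BDr hB) !(BZl hB) !(BZr hB) B11 B22 B21 hnorm12.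
rewrite ![B e1 _](BC hB) ![B e2 _](BC hB) pv1 pv2 pw1 pw2 !conj0.
ring.
Qed.

Definition c l b := PE (L l b e2).
Definition a_ l b := B (L l b e2) e2.
Definition Delta l b := complex.Im (a_ l b).
Definition pi l b u := PE (L l b u).
Definition EE (u : V) := B u e1 = 0 /\ B u e2 = 0.

Lemma cE l b : EE (c l b).
Proof. by split; [apply: PE_1 | apply: PE_2]. Qed.
Lemma piE l b u : EE (pi l b u).
Proof. by split; [apply: PE_1 | apply: PE_2]. Qed.

Lemma RCV (x : R) : x != 0 -> (x^-1)%:C = (x%:C)^-1 :> C.
Proof.
move=> x0; have xc : x%:C != 0 :> C by apply/negP => /eqP /RCinj /eqP; apply/negP.
by apply: (mulfI xc); rewrite -RCM divff // divff.
Qed.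

Lemma chiC_ne0 l : 0 < l -> (chi l)%:C != 0 :> C.
Proof.
move=> l0; apply/negP => /eqP h.
have : chi l = 0 by apply: RCinj.
by move=> h'; move: (chi_pos l0); rewrite h' ltxx.
Qed.

Lemma Le2_e1 l b : 0 < l -> B (L l b e2) e1 = ((chi l)^-1)%:C.
Proof.
move=> l0; have := LBB b l0 e2 e1; rewrite B21 Le1 // (BZr hB) conj_real => h.
have cn := chiC_ne0 l0.
rewrite RCV ?lt0r_neq0 ?chi_pos //; apply: (mulfI cn); by rewrite h divff.
Qed.

Lemma LE_e1 l b u : 0 < l -> EE u -> B (L l b u) e1 = 0.
Proof.
move=> l0 [u1 u2]; have := LBB b l0 u e1; rewrite u1 Le1 // (BZr hB) conj_real => /eqP.
rewrite mulf_eq0 => /orP[/eqP /RCinj h|/eqP //].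
by move: (chi_pos l0); rewrite h ltxx.
Qed.

Lemma a_Re l b : 0 < l -> complex.Re (a_ l b) = - (chi l * sqB B (c l b)) / 2.
Proof.
move=> l0; have := LBB b l0 e2 e2; rewrite B22 Bdec Le2_e1 // conj_real -/(a_ l b) -/(c l b).
move=> /(congr1 (@complex.Re R)).
rewrite ReD ReD (mulrC (a_ l b)) Re_rC Re_rC ReJ -/(sqB B _) ReC.
have cp := chi_pos l0.
move=> h.
have h2 : (chi l)^-1 * complex.Re (a_ l b) = - sqB B (c l b) / 2 by lra.
have -> : complex.Re (a_ l b) = chi l * ((chi l)^-1 * complex.Re (a_ l b)).
  by rewrite mulrA divff ?lt0r_neq0 // mul1r.
rewrite h2; ring.
Qed.


Lemma Le2_dec l b : 0 < l -> L l b e2 =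
  ((- (chi l * sqB B (c l b)) / 2)%:C + iC * (Delta l b)%:C) *: e1
  + ((chi l)^-1)%:C *: e2 + c l b.
Proof.
move=> l0; rewrite {1}(vdec (L l b e2)) Le2_e1 // -/(a_ l b) -/(c l b).
by rewrite {1}[a_ l b]complexE a_Re.
Qed.

Lemma LE_dec l b u : 0 < l -> EE u ->
  L l b u = (- (chi l)%:C * B (pi l b u) (c l b)) *: e1 + pi l b u.
Proof.
move=> l0 hu; rewrite {1}(vdec (L l b u)) (LE_e1 b l0 hu) scale0r addr0 -/(pi l b u).
congr (_ *: _ + _).
have := LBB b l0 u e2; rewrite hu.2 Bdec Le2_e1 // conj_real (LE_e1 b l0 hu) mul0r addr0.
rewrite -/(pi l b u) -/(c l b) RCV ?lt0r_neq0 ?chi_pos // => h.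
have cn := chiC_ne0 l0.
have hx : B (L l b u) e2 / (chi l)%:C = - B (pi l b u) (c l b).
  by apply/eqP; rewrite -addr_eq0 -h.
by rewrite -[B (L l b u) e2](divfK cn) hx; ring.
Qed.

Lemma pi_B l b u v : 0 < l -> EE u -> EE v -> B (pi l b u) (pi l b v) = B u v.
Proof.
move=> l0 hu hv; rewrite -(LBB b l0 u v) (Bdec (L l b u)) (LE_e1 b l0 hu) (LE_e1 b l0 hv).
by rewrite conj0 mulr0 mul0r !add0r.
Qed.

Lemma coc_c l b l' b' l'' b'' : 0 < l -> 0 < l' -> l'' = l * l' -> b'' = l * b' + b / l' ->
  c l'' b'' = ((chi l')^-1)%:C *: c l b + pi l b (c l' b').
Proof.
move=> l0 l'0 h1 h2; rewrite {1}/c (Lcomp l0 l'0 h1 h2) {1}(vdec (L l' b' e2)) Le2_e1 //.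
rewrite -/(c l' b'); move: (c l' b') => cc.
by rewrite !LD // !LZ // Le1 // !PE_D !PE_Z PE_e1 !scaler0 add0r.
Qed.

Lemma coc_a l b l' b' l'' b'' : 0 < l -> 0 < l' -> l'' = l * l' -> b'' = l * b' + b / l' ->
  a_ l'' b'' = a_ l' b' * (chi l)%:C + ((chi l')^-1)%:C * a_ l b
     - (chi l)%:C * B (pi l b (c l' b')) (c l b).
Proof.
move=> l0 l'0 h1 h2; rewrite {1}/a_ (Lcomp l0 l'0 h1 h2) {1}(vdec (L l' b' e2)) Le2_e1 //.
rewrite -/(c l' b') -/(a_ l' b').
have hLc := LE_dec b l0 (cE l' b').
move: (c l' b') (pi l b (c l' b')) (piE l b (c l' b')) hLc => cc pc hpc hLc.
rewrite !LD // !LZ // Le1 // hLc.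
rewrite !(BDl hB) !(BZl hB) hnorm12 hpc.2 -/(a_ l b).
ring.
Qed.

Lemma pi_hom l b l' b' l'' b'' : 0 < l -> 0 < l' -> (forall v, L l'' b'' v = L l b (L l' b' v)) ->
  forall u, EE u -> pi l'' b'' u = pi l b (pi l' b' u).
Proof.
move=> l0 l'0 hc u hu; rewrite {1}/pi hc (LE_dec b' l'0 hu).
by rewrite LD // LZ // Le1 // PE_D !PE_Z PE_e1 !scaler0 add0r.
Qed.

Lemma pi_unitary l b : 0 < l -> unitaryB_on B EE (pi l b).
Proof.
move=> l0; split.
- by move=> u _; apply: piE.
- by move=> a u v _ _; rewrite /pi LD // LZ // PE_D PE_Z.
- by move=> u v hu hv; apply: pi_B.
move=> v [v1 v2]; have [_ [g gK Kg] _] := hLU b l0.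
have Lu : L l b (g v) = v := Kg v.
have Y0 : B (g v) e1 = 0.
  by rewrite -(LBB b l0) Lu Le1 // (BZr hB) v1 mulr0.
exists (PE (g v)); first by split; [apply: PE_1 | apply: PE_2].
have -> : PE (g v) = g v - B (g v) e2 *: e1 by rewrite /PE Y0 scale0r subr0.
by rewrite /pi LB // LZ // Le1 // PE_B !PE_Z PE_e1 !scaler0 subr0 Lu PE_E.
Qed.

Lemma c_l0 l : 0 < l -> c l 0 = 0.
Proof. by move=> l0; have [mu hmu] := Le2_line l0; rewrite /c hmu PE_Z PE_e2 scaler0. Qed.

Lemma a_l0 l : 0 < l -> a_ l 0 = 0.
Proof. by move=> l0; have [mu hmu] := Le2_line l0; rewrite /a_ hmu (BZl hB) B22 mulr0. Qed.


Definition KPE := 4 + 4 * KB B e e2 * norm2 B e e1 + 2 * KB B e e1 * norm2 B e e2.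

Lemma KPE_gt0 : 0 < KPE.
Proof.
rewrite /KPE; have := KB_gt0 hB hsig e2; have := KB_gt0 hB hsig e1.
have := n2_ge0 hB hsig e1; have := n2_ge0 hB hsig e2; nra.
Qed.

Lemma KPE_bound x : norm2 B e (PE x) <= KPE * norm2 B e x.
Proof.
rewrite /PE; set X := B x e2 *: e1; set Y := B x e1 *: e2.
have h1 := n2B hB hsig (x - X) Y.
have h2 := n2B hB hsig x X.
have hX : norm2 B e X <= KB B e e2 * norm2 B e x * norm2 B e e1.
  rewrite /X (n2Z hB); apply: ler_pM; [exact: nsq_ge0 | exact: n2_ge0 | exact: Bbound | by []].
have hY : norm2 B e Y <= KB B e e1 * norm2 B e x * norm2 B e e2.
  rewrite /Y (n2Z hB); apply: ler_pM; [exact: nsq_ge0 | exact: n2_ge0 | exact: Bbound | by []].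
rewrite /KPE; lra.
Qed.

Lemma cont_PE f : contP_V B e f -> contP_V B e (fun l b => PE (f l b)).
Proof.
move=> hf l0 b0 l0p eps eps0.
have [d d0 hd] := hf l0 b0 l0p (eps / KPE) (divr_gt0 eps0 KPE_gt0).
exists d => // l b lp h1 h2; rewrite -PE_B.
apply: le_lt_trans (KPE_bound _) _.
have := hd l b lp h1 h2 => h.
have : KPE * norm2 B e (f l b - f l0 b0) < KPE * (eps / KPE) by rewrite ltr_pM2l // KPE_gt0.
by rewrite [KPE * (eps / KPE)]mulrC divfK // lt0r_neq0 // KPE_gt0.
Qed.

Lemma sq_lt (r eps : R) : 0 < eps -> r ^+ 2 < eps ^+ 2 -> `|r| < eps.
Proof.
move=> e0 h; have := real_normK (num_real r) => hn.
have := normr_ge0 r; rewrite -hn in h; nra.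
Qed.

Lemma cont_sc f w (P : C -> R) : contP_V B e f -> (forall z, P z ^+ 2 <= nsq z) ->
  (forall z z', P z - P z' = P (z - z')) -> contP_R (fun l b => P (B (f l b) w)).
Proof.
move=> hf hP hPB l0 b0 l0p eps eps0.
have K0 := KB_gt0 hB hsig w.
have [d d0 hd] := hf l0 b0 l0p (eps ^+ 2 / KB B e w) (divr_gt0 (exprn_gt0 2 eps0) K0).
exists d => // l b lp h1 h2; apply: sq_lt => //.
rewrite hPB -(BBl hB); apply: le_lt_trans (hP _) _.
apply: le_lt_trans (Bbound hB hsig _ _) _.
have := hd l b lp h1 h2 => h.
have : KB B e w * norm2 B e (f l b - f l0 b0) < KB B e w * (eps ^+ 2 / KB B e w) by rewrite ltr_pM2l.
by rewrite [KB B e w * (_ / _)]mulrC divfK // lt0r_neq0.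
Qed.

Lemma ReB (z z' : C) : complex.Re z - complex.Re z' = complex.Re (z - z').
Proof. by rewrite ReD ReN. Qed.
Lemma ImB (z z' : C) : complex.Im z - complex.Im z' = complex.Im (z - z').
Proof. by rewrite ImD ImN. Qed.

Lemma chi_cont x0 : 0 < x0 -> forall eps : R, 0 < eps -> exists2 d : R, 0 < d &
  forall x, 0 < x -> `|x - x0| < d -> `|chi x - chi x0| < eps.
Proof.
move=> x0p eps eps0.
have [d d0 hd] := cont_sc e2 (hLcont e1) (@Re_le_nsq R) ReB 0 x0p eps0.
exists d => // x xp hx; apply: (hd x 0 xp hx); by rewrite subrr normr0.
Qed.

Lemma Delta_cont : contP_R Delta.
Proof. exact: (cont_sc e2 (hLcont e2) (@Im_le_nsq R) ImB). Qed.

Lemma pi0 l b : 0 < l -> pi l b 0 = 0.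
Proof. by move=> l0; rewrite /pi L0 // PE0. Qed.

Lemma RC1 : (1 : R)%:C = 1 :> C. Proof. by []. Qed.


Lemma main_sec :
  let E := fun u : V => B u eta1 = 0 /\ B u eta2 = 0 in
  exists chi : R -> R, cont_iso_pos chi /\
  exists (Delta : R -> R -> R) (c : R -> R -> V) (pi : R -> R -> V -> V),
    (forall l b : R, 0 < l ->
       [/\ L l b eta1 = (chi l)%:C *: eta1,
           L l b eta2 = ((- (chi l * sqB B (c l b)) / 2)%:C + iC * (Delta l b)%:C) *: eta1
                        + ((chi l)^-1)%:C *: eta2 + c l b &
           forall u, E u ->
             L l b u = (- (chi l)%:C * B (pi l b u) (c l b)) *: eta1 + pi l b u]) /\
    contP_R Delta /\
    (forall l b : R, 0 < l -> E (c l b)) /\ contP_V B e c /\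
    (forall l b : R, 0 < l -> unitaryB_on B E (pi l b)) /\
    (forall l b l' b' l'' b'' : R, 0 < l -> 0 < l' -> 0 < l'' ->
       gP l b *m gP l' b' = gP l'' b'' ->
       forall u, E u -> pi l'' b'' u = pi l b (pi l' b' u)) /\
    (forall u, E u -> contP_V B e (fun l b => pi l b u)) /\
    (forall (l : R) (b d : R), 0 < l ->
       c 1 (b + d) = c 1 b + pi 1 b (c 1 d) /\
           Delta l 0 = 0 /\ c l 0 = 0 /\
           (chi l)%:C *: pi l 0 (c 1 b) = c 1 (l ^+ 2 * b) /\
           chi l ^+ 2 * Delta 1 b = Delta 1 (l ^+ 2 * b) /\
           Delta 1 (- b) = - Delta 1 b /\
           complex.Im (B (c 1 d) (c 1 b)) = Delta 1 (d - b) - Delta 1 d + Delta 1 b /\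
           complex.Re (B (c 1 d) (c 1 b)) =
                 - sqB B (c 1 (d - b)) / 2 + sqB B (c 1 b) / 2 + sqB B (c 1 d) / 2).
Proof.
move=> E; exists chi; split.
  split.
  - by move=> x; apply: chi_pos.
  - by move=> x y x0 y0; apply: chi_mul.
  - by move=> x y x0 y0; apply: chi_inj.
  - exact: (@hom_surj R chi chi_pos (fun x y x0 y0 => chi_mul x0 y0) chi_cont 2 two_gt0
      (chi_ne1 two_gt0 two_ne1)).
  - exact: chi_cont.
exists Delta, c, pi; split.
  by move=> l b l0; split; [apply: Le1 | apply: Le2_dec | move=> u hu; apply: LE_dec].
split; first exact: Delta_cont.
split; first by move=> l b _; apply: cE.
split; first exact: cont_PE (hLcont e2).
split; first by move=> l b l0; apply: pi_unitary.
split.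
  move=> l b l' b' l'' b'' l0 l'0 l''0 hg u hu.
  by apply: pi_hom => //; apply: hLhom.
split; first by move=> u _; apply: cont_PE (hLcont u).
move=> l b d l0.
have c1 : ((chi 1)^-1)%:C = 1 :> C by rewrite chi1 invr1.
have c1' : (chi 1)%:C = 1 :> C by rewrite chi1.
have cl := chiC_ne0 l0.
split.
  have := coc_c (l:=1) (b:=b) (l':=1) (b':=d) (l'':=1) (b'':=b + d) ltr01 ltr01.
  rewrite mulr1 mul1r divr1 addrC => /(_ erefl erefl).
  by rewrite c1 scale1r.
split; first by rewrite /Delta a_l0.
split; first exact: c_l0.
have h1 := coc_c (l:=l) (b:=0) (l':=1) (b':=b) (l'':=l) (b'':=l * b) l0 ltr01.
rewrite mulr1 mul0r addr0 in h1; move: h1 => /(_ erefl erefl) h1.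
have e2b : l * b = 1 * 0 + l ^+ 2 * b / l by rewrite mulr0 add0r expr2; field; rewrite lt0r_neq0.
have h2 := coc_c (l:=1) (b:=l ^+ 2 * b) (l':=l) (b':=0) (l'':=l) (b'':=l * b) ltr01 l0 (esym (mul1r l)) e2b.
have ha1 := coc_a (l:=l) (b:=0) (l':=1) (b':=b) (l'':=l) (b'':=l * b) l0 ltr01 (esym (mulr1 l)).
rewrite mul0r addr0 in ha1; move: ha1 => /(_ erefl) ha1.
have ha2 := coc_a (l:=1) (b:=l ^+ 2 * b) (l':=l) (b':=0) (l'':=l) (b'':=l * b) ltr01 l0 (esym (mul1r l)) e2b.
rewrite c1 c_l0 // scaler0 add0r in h1.
rewrite c_l0 // pi0 // addr0 in h2.
split.
  rewrite -h1 h2 scalerA -RCM mulfV ?scale1r //.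
  by rewrite lt0r_neq0 // chi_pos.
split.
  rewrite a_l0 // c_l0 // (B0r hB) !mulr0 subr0 addr0 in ha1.
  rewrite a_l0 // c_l0 // pi0 // (B0l hB) mul0r mulr0 subr0 add0r in ha2.
  have := congr1 (@complex.Im R) (etrans (esym ha1) ha2).
  rewrite mulrC !Im_rC /Delta => h.
  rewrite expr2 -mulrA h mulrA mulfV ?mul1r //.
  by rewrite lt0r_neq0 // chi_pos.
split.
  have hc := coc_c (l:=1) (b:=b) (l':=1) (b':=- b) (l'':=1) (b'':=0) ltr01 ltr01.
  rewrite mulr1 mul1r divr1 addNr in hc; move: hc => /(_ erefl erefl) hc.
  have ha := coc_a (l:=1) (b:=b) (l':=1) (b':=- b) (l'':=1) (b'':=0) ltr01 ltr01.
  rewrite mulr1 mul1r divr1 addNr in ha; move: ha => /(_ erefl erefl) ha.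
  rewrite c1 scale1r c_l0 // in hc.
  have hp : pi 1 b (c 1 (- b)) = - c 1 b.
    by rewrite -(addKr (c 1 b) (pi 1 b (c 1 (- b)))) -hc addr0.
  rewrite a_l0 // c1 c1' hp (BNl hB) !mul1r mulr1 in ha.
  have := congr1 (@complex.Im R) ha.
  rewrite !ImD !ImN (Bself_Im hB) /Delta /=; lra.
have hc := coc_c (l:=1) (b:=b) (l':=1) (b':=d - b) (l'':=1) (b'':=d) ltr01 ltr01.
rewrite mulr1 mul1r divr1 subrK in hc; move: hc => /(_ erefl erefl) hc.
have ha := coc_a (l:=1) (b:=b) (l':=1) (b':=d - b) (l'':=1) (b'':=d) ltr01 ltr01.
rewrite mulr1 mul1r divr1 subrK in ha; move: ha => /(_ erefl erefl) ha.
rewrite c1 scale1r in hc; rewrite c1 c1' !mul1r mulr1 in ha.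
set p := pi 1 b (c 1 (d - b)) in hc ha.
have hBp : B p (c 1 b) = a_ 1 (d - b) + a_ 1 b - a_ 1 d by rewrite ha; ring.
split.
  rewrite hc (BDl hB) ImD (Bself_Im hB) add0r hBp !ImD ImN /Delta; lra.
have hp : p = c 1 d - c 1 b by rewrite hc [c 1 b + _]addrC addrK.
have hs : sqB B (c 1 (d - b)) = sqB B p by rewrite /sqB /p pi_B //; apply: cE.
rewrite hs hp; move: (c 1 d) (c 1 b) => X Y.
rewrite /sqB !(BBl hB) !(BBr hB) [B Y X](BC hB) !ReD !ReN !ReD ?ReN ReJ.
lra.
Qed.

End Main.

Theorem mainTheorem8
  (R : realType) (V : lmodType R[i]) (B : V -> V -> R[i]) (e : V)
  (hB : hermitian_form B) (hsig : strongly_nondeg_sig_1_inf B e)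
  (rho : 'M[R[i]]_2 -> V -> V)
  (hrho : proj_rep B rho) (hirr : irreducible_rep B e rho)
  (eta1 eta2 : V)
  (* eta1: the unique boundary point fixed by rho(P) *)
  (heta1 : isotropic B eta1)
  (hfix1 : forall l b : R, 0 < l -> same_line (rho (gP l b) eta1) eta1)
  (huniq1 : forall x, isotropic B x ->
       (forall l b : R, 0 < l -> same_line (rho (gP l b) x) x) -> same_line x eta1)
  (* eta2: the other endpoint of the common axis of rho(g(lambda,0)), lambda <> 1 *)
  (haxis : forall l : R, 0 < l -> l != 1 -> hyperbolic_axis B (rho (gP l 0)) eta1 eta2)
  (hnorm12 : B eta1 eta2 = 1)
  (* continuous homomorphic lift rho : P -> U(B), normalized *)
  (L : R -> R -> V -> V)
  (hLU : forall l b : R, 0 < l -> unitaryB B (L l b))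
  (hLhom : forall l b l' b' l'' b'' : R, 0 < l -> 0 < l' -> 0 < l'' ->
       gP l b *m gP l' b' = gP l'' b'' ->
       forall v, L l'' b'' v = L l b (L l' b' v))
  (hLlift : forall l b : R, 0 < l -> exists2 mu : R[i], cabs mu = 1 &
       forall v, L l b v = mu *: rho (gP l b) v)
  (hLcont : forall v, contP_V B e (fun l b => L l b v))
  (hLnorm : forall l b : R, 0 < l -> 0 < B (L l b eta1) eta2) :
  let E := fun u : V => B u eta1 = 0 /\ B u eta2 = 0 in
  exists chi : R -> R, cont_iso_pos chi /\
  exists (Delta : R -> R -> R) (c : R -> R -> V) (pi : R -> R -> V -> V),
    (* the matrix of rho(g(lambda,b)) w.r.t. C eta1 (+) C eta2 (+) E *)
    (forall l b : R, 0 < l ->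
       [/\ L l b eta1 = (chi l)%:C *: eta1,
           L l b eta2 = ((- (chi l * sqB B (c l b)) / 2)%:C + iC * (Delta l b)%:C) *: eta1
                        + ((chi l)^-1)%:C *: eta2 + c l b &
           forall u, E u ->
             L l b u = (- (chi l)%:C * B (pi l b u) (c l b)) *: eta1 + pi l b u]) /\
    (* (1) *)
    contP_R Delta /\
    (* (2) *)
    (forall l b : R, 0 < l -> E (c l b)) /\ contP_V B e c /\
    (* (3) *)
    (forall l b : R, 0 < l -> unitaryB_on B E (pi l b)) /\
    (forall l b l' b' l'' b'' : R, 0 < l -> 0 < l' -> 0 < l'' ->
       gP l b *m gP l' b' = gP l'' b'' ->
       forall u, E u -> pi l'' b'' u = pi l b (pi l' b' u)) /\
    (forall u, E u -> contP_V B e (fun l b => pi l b u)) /\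
    (forall (l : R) (b d : R), 0 < l ->
       (* (4) *) c 1 (b + d) = c 1 b + pi 1 b (c 1 d) /\
           (* (5) *) Delta l 0 = 0 /\ c l 0 = 0 /\
           (* (6) *) (chi l)%:C *: pi l 0 (c 1 b) = c 1 (l ^+ 2 * b) /\
           (* (7) *) chi l ^+ 2 * Delta 1 b = Delta 1 (l ^+ 2 * b) /\
           (* (8) *) Delta 1 (- b) = - Delta 1 b /\
           (* (9) *) complex.Im (B (c 1 d) (c 1 b)) = Delta 1 (d - b) - Delta 1 d + Delta 1 b /\
           (* (10) *) complex.Re (B (c 1 d) (c 1 b)) =
                 - sqB B (c 1 (d - b)) / 2 + sqB B (c 1 b) / 2 + sqB B (c 1 d) / 2).
Proof.
by eapply main_sec; eassumption.
Qed.
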